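(* Let $m\ge0$ be an integer, $w_0\in L_{2m}$ the basis vector of weight $0$, $\mu$ generic, and $\Phi^{w_0,\mathrm{trig}}_\mu$ as in the context. If $|q^{-2\lambda}|$ is sufficiently small, the trace $\mathrm{Tr}|_{M_\mu}(\Phi^{w_0,\mathrm{trig}}_\mu q^{2\lambda\rho})$ converges and \[ \mathrm{Tr}|_{M_\mu}(\Phi^{w_0,\mathrm{trig}}_\mu q^{2\lambda\rho})=q^{\lambda\mu}\sum_{l=0}^m(-1)^lq^{-2\lambda l}q^{-l(l-1)/2}\frac{[m]_l[m+l]_l}{[l]_l}\frac{(q-q^{-1})^l}{\prod_{i=0}^{l-1}(1-q^{-2\mu+2i})\prod_{i=0}^l(1-q^{-2\lambda-2i})}. \]
   Context: $q\in\mathbb{C}^\times$ transcendental over $\mathbb{Q}$, $q^x:=e^{x\log q}$, $[n]=\frac{q^n-q^{-n}}{q-q^{-1}}$, $[n]_l=[n][n-1]\cdots[n-l+1]$. $U_q(\mathfrak{sl}_2)$ is generated by $e,f,q^h$ with $q^heq^{-h}=q^2e$, $q^hfq^{-h}=q^{-2}f$, $[e,f]=\frac{q^h-q^{-h}}{q-q^{-1}}$, coproduct $\Delta(e)=e\otimes1+q^h\otimes e$, $\Delta(f)=f\otimes q^{-h}+1\otimes f$, $\Delta(q^h)=q^h\otimes q^h$. $M_\mu$ is the Verma module with basis $f^jv_\mu$ ($j\ge0$): $ef^jv_\mu=[\mu-j+1][j]f^{j-1}v_\mu$, $f\cdot f^jv_\mu=f^{j+1}v_\mu$, $q^hf^jv_\mu=q^{\mu-2j}f^jv_\mu$.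 $L_{2m}$ is the irreducible module with basis $w_{2j}$, $-m\le j\le m$: $ew_{2j}=[m-j]w_{2j+2}$, $fw_{2j}=[m+j]w_{2j-2}$, $q^hw_{2j}=q^{2j}w_{2j}$. $\Phi^{w_0,\mathrm{trig}}_\mu:M_\mu\to M_\mu\widehat\otimes L_{2m}$ is the unique intertwiner with $v_\mu\mapsto v_\mu\otimes w_0+$ terms of lower weight in the first factor. $q^{2\lambda\rho}$ acts on $f^jv_\mu$ by $q^{\lambda(\mu-2j)}$; the trace is valued in $L_{2m}[0]=\mathbb{C}w_0\cong\mathbb{C}$. *)

(* Defs.v *)
From Stdlib Require Import Reals QArith Qreals ZArith List.
From Coquelicot Require Import Coquelicot.

Open Scope C_scope.

Definition cexp (z : C) : C :=
  (exp (fst z) * cos (snd z), exp (fst z) * sin (snd z))%R.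

Fixpoint Qpoly_eval (p : list Q) (z : C) : C :=
  match p with
  | nil => 0
  | c :: p' => RtoC (Q2R c) + z * Qpoly_eval p' z
  end.

Definition transcendental (z : C) : Prop :=
  forall p : list Q, (exists c, In c p /\ ~ (c == 0)%Q) -> Qpoly_eval p z <> 0.

(** Throughout, [L] is a fixed logarithm of q, i.e. q = cexp L, and
    q^x := e^{x log q} = cexp (x * L). *)
Definition qpow (L x : C) : C := cexp (x * L).

Definition qnum (L x : C) : C :=
  (qpow L x - qpow L (- x)) / (qpow L 1 - qpow L (-1)).

Fixpoint qfall (L : C) (n l : nat) : C :=
  match l with
  | O => 1
  | S l' => qnum L (INR n - INR l') * qfall L n l'
  end.

Fixpoint cprod (f : nat -> C) (n : nat) : C :=
  match n with
  | O => 1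
  | S n' => cprod f n' * f n'
  end.

(** Elements of the (completed) tensor product M_mu ⊗̂ L_{2m} are described by
    their coefficients: X i k = coefficient of f^i v_mu ⊗ w_{2k}
    (i >= 0, k an integer, only -m <= k <= m is meaningful). *)
Definition tensor := nat -> Z -> C.

(** Action of Δ(e) = e ⊗ 1 + q^h ⊗ e on coefficients, using
    e f^{i+1} v = [mu - i][i+1] f^i v  and  e w_{2k-2} = [m-k+1] w_{2k}. *)
Definition tensor_e (L mu : C) (m : nat) (X : tensor) : tensor :=
  fun i k =>
    qnum L (mu - INR i) * qnum L (INR i + 1) * X (S i) k
    + qpow L (mu - 2 * INR i) * qnum L (INR m - (IZR k - 1)) * X i (k - 1)%Z.

(** Action of Δ(f) = f ⊗ q^{-h} + 1 ⊗ f on coefficients, using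
    f (f^{i-1} v) = f^i v, q^{-h} w_{2k} = q^{-2k} w_{2k},
    f w_{2k+2} = [m+k+1] w_{2k}. *)
Definition tensor_f (L : C) (m : nat) (X : tensor) : tensor :=
  fun i k =>
    match i with
    | O => 0
    | S i' => qpow L (- 2 * IZR k) * X i' k
    end
    + qnum L (INR m + IZR k + 1) * X i (k + 1)%Z.

(** Action of Δ(q^h) = q^h ⊗ q^h on coefficients. *)
Definition tensor_qh (L mu : C) (X : tensor) : tensor :=
  fun i k => qpow L (mu - 2 * INR i + 2 * IZR k) * X i k.

(** A linear map Phi : M_mu -> M_mu ⊗̂ L_{2m}, given by
    Phi j = image of the basis vector f^j v_mu. *)
Definition vmap := nat -> tensor.

Definition is_intertwiner (L mu : C) (m : nat) (Phi : vmap) : Prop :=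
  (* values lie in M_mu ⊗̂ L_{2m}: only weights -2m..2m of L_{2m} occur *)
  (forall j i k, (k < - Z.of_nat m \/ Z.of_nat m < k)%Z -> Phi j i k = 0)
  (* Phi (q^h x) = Δ(q^h) Phi(x) *)
  /\ (forall j i k, tensor_qh L mu (Phi j) i k = qpow L (mu - 2 * INR j) * Phi j i k)
  (* Phi (e x) = Δ(e) Phi(x), with e f^j v = [mu-j+1][j] f^{j-1} v *)
  /\ (forall j i k, tensor_e L mu m (Phi j) i k =
        match j with
        | O => 0
        | S j' => qnum L (mu - INR j') * qnum L (INR j' + 1) * Phi j' i k
        end)
  (* Phi (f x) = Δ(f) Phi(x) *)
  /\ (forall j i k, tensor_f L m (Phi j) i k = Phi (S j) i k).

(** Phi^{w0,trig}_mu: the intertwiner with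
    v_mu |-> v_mu ⊗ w_0 + (terms of lower weight in the first factor). *)
Definition is_Phi_w0_trig (L mu : C) (m : nat) (Phi : vmap) : Prop :=
  is_intertwiner L mu m Phi /\ Phi O O 0%Z = 1 /\
  (forall k, k <> 0%Z -> Phi O O k = 0).

(** j-th term of Tr|_{M_mu}(Phi q^{2 lambda rho}) (the w_0-coefficient,
    the trace being valued in L_{2m}[0] = C w_0):
    q^{lambda (mu - 2 j)} * <f^j v_mu ⊗ w_0 coefficient of Phi(f^j v_mu)>. *)
Definition trace_term (L mu lam : C) (Phi : vmap) (j : nat) : C :=
  qpow L (lam * (mu - 2 * INR j)) * Phi j j 0%Z.

Definition trace_formula (L mu lam : C) (m : nat) : C :=
  qpow L (lam * mu) *
  sum_n (fun l =>
     (-1) ^ l * qpow L (- 2 * lam * INR l)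
     * qpow L (- (INR l * (INR l - 1) / 2)%R)
     * (qfall L m l * qfall L (m + l) l / qfall L l l)
     * ((qpow L 1 - qpow L (-1)) ^ l
        / (cprod (fun i => 1 - qpow L (- 2 * mu + 2 * INR i)) l
           * cprod (fun i => 1 - qpow L (- 2 * lam - 2 * INR i)) (S l))))
   m.

(* Main.v *)
Require Import Defs.
From Stdlib Require Import Reals QArith ZArith.
From Coquelicot Require Import Coquelicot.
From Stdlib Require Import Reals QArith Qreals ZArith List Lia Lra Classical.
From Coquelicot Require Import Coquelicot.
Open Scope C_scope.

Lemma cexp_add a b : cexp (a + b) = cexp a * cexp b.
Proof.
  unfold cexp. destruct a as [a1 a2], b as [b1 b2]. simpl.
  rewrite exp_plus, cos_plus, sin_plus.
  apply injective_projections; simpl; ring.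
Qed.

Lemma cexp_0 : cexp 0 = 1.
Proof.
  unfold cexp. simpl. rewrite exp_0, cos_0, sin_0.
  apply injective_projections; simpl; ring.
Qed.

Lemma cexp_nat n z : cexp (RtoC (INR n) * z) = cexp z ^ n.
Proof.
  induction n.
  - simpl. replace (RtoC 0 * z) with (RtoC 0) by ring. apply cexp_0.
  - rewrite S_INR, RtoC_plus.
    replace ((RtoC (INR n) + RtoC 1) * z) with (RtoC (INR n) * z + z) by ring.
    rewrite cexp_add, IHn. simpl. ring.
Qed.

Lemma qpow_add L a b : qpow L (a + b) = qpow L a * qpow L b.
Proof. unfold qpow. rewrite <- cexp_add. f_equal. ring. Qed.

Lemma qpow_0 L : qpow L 0 = 1.
Proof. unfold qpow. replace (0 * L) with (RtoC 0) by ring. apply cexp_0. Qed.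

Lemma qpow_ext L a b : a = b -> qpow L a = qpow L b.
Proof. intros ->; reflexivity. Qed.

Lemma qpow_nat L n z : qpow L (RtoC (INR n) * z) = qpow L z ^ n.
Proof. unfold qpow. rewrite <- cexp_nat. f_equal. ring. Qed.

Lemma Cinv_0 : / (0:C) = 0.
Proof. unfold Cinv. simpl. apply injective_projections; simpl; unfold Rdiv; ring. Qed.

Lemma Cinv_mult_gen (a b : C) : / (a * b) = / a * / b.
Proof.
  destruct (classic (a = 0)) as [->|Ha].
  { rewrite Cmult_0_l, Cinv_0. ring. }
  destruct (classic (b = 0)) as [->|Hb].
  { rewrite Cmult_0_r, Cinv_0. ring. }
  field. split; auto.
Qed.

Fixpoint zl (k : nat) : list Q := match k with O => (1%Q :: nil) | S k' => 0%Q :: zl k' end.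

Lemma Q2R_0' : Q2R 0 = 0%R.
Proof. unfold Q2R. simpl. lra. Qed.
Lemma Q2R_1' : Q2R 1 = 1%R.
Proof. unfold Q2R. simpl. lra. Qed.
Lemma Q2R_m1' : Q2R (-1) = (-1)%R.
Proof. unfold Q2R. simpl. lra. Qed.

Lemma eval_zl k z : Qpoly_eval (zl k) z = z ^ k.
Proof.
  induction k; simpl.
  - rewrite Q2R_1'. simpl. ring.
  - rewrite IHk, Q2R_0'. ring.
Qed.

Lemma in_zl k : In 1%Q (zl k).
Proof. induction k; simpl; auto. Qed.

Lemma trans_pow L n : transcendental (cexp L) -> (1 <= n)%nat -> cexp L ^ n <> 1.
Proof.
  intros T Hn E.
  apply (T ((-1)%Q :: zl (pred n))).
  - exists 1%Q. split. right. apply in_zl. intro H. compute in H. discriminate.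
  - simpl. rewrite eval_zl, Q2R_m1'.
    destruct n. lia. simpl in *. rewrite E. apply injective_projections; simpl; ring.
Qed.
Lemma Csub0 (a b : C) : a - b = 0 -> a = b.
Proof. intro H. replace a with (a - b + b) by ring. rewrite H. ring. Qed.

Lemma qpow_2a L a : qpow L a = qpow L (- a) -> qpow L (2 * a) = 1.
Proof.
  intro E. replace (2 * a) with (a + a) by ring. rewrite qpow_add.
  rewrite E at 1. rewrite <- qpow_add. replace (-a + a) with (RtoC 0) by ring. apply qpow_0.
Qed.

Lemma qpow_2n L n : qpow L (2 * INR n) = cexp L ^ (2 * n).
Proof.
  replace (2 * RtoC (INR n)) with (RtoC (INR (2 * n)) * 1).
  - rewrite qpow_nat. unfold qpow. rewrite Cmult_1_l. reflexivity.
  - rewrite mult_INR. rewrite RtoC_mult. simpl INR. rewrite RtoC_plus. ring.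
Qed.

Lemma qpow_2n_ne1 L n : transcendental (cexp L) -> (1 <= n)%nat -> qpow L (2 * INR n) <> 1.
Proof. intros T H. rewrite qpow_2n. apply trans_pow; auto. lia. Qed.

Lemma D_nz L : transcendental (cexp L) -> qpow L 1 - qpow L (-1) <> 0.
Proof.
  intros T E. apply (qpow_2n_ne1 L 1 T (le_n 1)).
  apply qpow_2a. simpl. rewrite (qpow_ext L (- (1)) (-1)) by ring.
  apply Csub0; auto.
Qed.
Lemma C1_neq_C0 : (1:C) <> 0.
Proof. intro H. apply (f_equal fst) in H. simpl in H. lra. Qed.

Lemma Cmult_integral (a b : C) : a * b = 0 -> a = 0 \/ b = 0.
Proof.
  intro H. destruct (classic (a = 0)) as [Ha|Ha]; [left; auto|right].
  replace b with (/ a * (a * b)) by (field; auto). rewrite H. ring.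
Qed.

Lemma qnum_D L a : qpow L 1 - qpow L (-1) <> 0 ->
  qnum L a * (qpow L 1 - qpow L (-1)) = qpow L a - qpow L (- a).
Proof. intro H. unfold qnum. field. auto. Qed.

Lemma qnum_nz L a : qpow L 1 - qpow L (-1) <> 0 -> qpow L (2 * a) <> 1 -> qnum L a <> 0.
Proof.
  intros H1 H2 H. apply H2. apply qpow_2a. apply Csub0.
  rewrite <- qnum_D by auto. rewrite H. ring.
Qed.

Lemma qnum_nat_nz L n : transcendental (cexp L) -> (1 <= n)%nat -> qnum L (INR n) <> 0.
Proof. intros T H. apply qnum_nz. apply D_nz; auto. apply qpow_2n_ne1; auto. Qed.

Lemma qnum_mu_nz L mu i : transcendental (cexp L) ->
  (forall n : nat, qpow L (2 * mu) <> qpow L (2 * INR n)) -> qnum L (mu - INR i) <> 0.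
Proof.
  intros T G. apply qnum_nz. apply D_nz; auto. intro E. apply (G i).
  rewrite (qpow_ext L (2 * mu) (2 * (mu - INR i) + 2 * INR i)) by ring.
  rewrite qpow_add, E. ring.
Qed.

Lemma W_nz L mu i : 
  (forall n : nat, qpow L (2 * mu) <> qpow L (2 * INR n)) -> 1 - qpow L (- 2 * mu + 2 * INR i) <> 0.
Proof.
  intros G E. apply (G i). apply Csub0 in E.
  rewrite (qpow_ext L (2 * INR i) (2 * mu + (- 2 * mu + 2 * INR i))) by ring.
  rewrite qpow_add, <- E. ring.
Qed.

Ltac qarg := f_equal; rewrite ?S_INR, ?RtoC_plus, ?RtoC_mult, ?RtoC_minus; ring.

Lemma qfall_front L n l : qfall L (S n) (S l) = qnum L (INR (S n)) * qfall L n l.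
Proof.
  induction l.
  - change (qfall L (S n) 1) with (qnum L (INR (S n) - INR 0) * 1).
    change (qfall L n 0) with (1:C). f_equal. f_equal. simpl (INR 0). ring.
  - change (qfall L (S n) (S (S l))) with (qnum L (INR (S n) - INR (S l)) * qfall L (S n) (S l)).
    rewrite IHl. change (qfall L n (S l)) with (qnum L (INR n - INR l) * qfall L n l).
    replace (qnum L (INR (S n) - INR (S l))) with (qnum L (INR n - INR l)) by qarg.
    ring.
Qed.

Lemma qfall_diag_nz L l : transcendental (cexp L) -> qfall L l l <> 0.
Proof.
  intro T. induction l.
  - simpl. intro H. apply C1_neq_C0. auto.
  - rewrite qfall_front. intro H. apply Cmult_integral in H. destruct H as [H|H].
    + revert H. apply qnum_nat_nz; auto. lia.
    + auto.
Qed.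

Lemma cprod_nz (f : nat -> C) n : (forall i, f i <> 0) -> cprod f n <> 0.
Proof.
  intro H. induction n; simpl.
  - apply C1_neq_C0.
  - intro E. apply Cmult_integral in E. destruct E as [E|E]. apply IHn; auto. apply (H n); auto.
Qed.

Definition cf L mu m l :=
  (-1) ^ l * qpow L (- (INR l * (INR l - 1) / 2)%R) * qfall L m l
  * (qpow L 1 - qpow L (-1)) ^ l
  * / (qfall L l l * cprod (fun i => 1 - qpow L (- 2 * mu + 2 * INR i)) l).

Lemma tri L l : qpow L (- (INR (S l) * (INR (S l) - 1) / 2)%R)
  = qpow L (- (INR l * (INR l - 1) / 2)%R) * qpow L (- INR l).
Proof.
  rewrite <- qpow_add. apply qpow_ext. rewrite S_INR.
  apply injective_projections; simpl; field.
Qed.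

Lemma cf_rec L mu m l : transcendental (cexp L) ->
  (forall n : nat, qpow L (2 * mu) <> qpow L (2 * INR n)) ->
  cf L mu m (S l) * (qnum L (mu - INR l) * qnum L (INR l + 1))
  = - (qpow L (mu - 2 * INR l) * qnum L (INR m - INR l) * cf L mu m l).
Proof.
  intros T G. unfold cf.
  rewrite tri, qfall_front.
  replace (qnum L (INR (S l))) with (qnum L (INR l + 1)) by qarg.
  change (qfall L m (S l)) with (qnum L (INR m - INR l) * qfall L m l).
  change (cprod (fun i => 1 - qpow L (- 2 * mu + 2 * INR i)) (S l))
    with (cprod (fun i => 1 - qpow L (- 2 * mu + 2 * INR i)) l * (1 - qpow L (- 2 * mu + 2 * INR l))).
  simpl Cpow.
  set (P := qpow L (mu - INR l)).
  set (W := qpow L (- 2 * mu + 2 * INR l)).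
  assert (E1 : qpow L (mu - 2 * INR l) = qpow L (- INR l) * P).
  { unfold P. rewrite <- qpow_add. apply qpow_ext. ring. }
  assert (E2 : qnum L (mu - INR l) = (P - P * W) / (qpow L 1 - qpow L (-1))).
  { unfold qnum. f_equal. unfold P, W. rewrite <- qpow_add. f_equal. apply qpow_ext. ring. }
  rewrite E1, E2.
  assert (H1 := D_nz L T).
  assert (H2 := qfall_diag_nz L l T).
  assert (H3 := cprod_nz (fun i => 1 - qpow L (- 2 * mu + 2 * INR i)) l (fun i => W_nz L mu i G)).
  assert (H4 := W_nz L mu l G). fold W in H4.
  assert (H5 : qnum L (INR l + 1) <> 0).
  { replace (INR l + 1) with (RtoC (INR (S l))) by (rewrite S_INR, RtoC_plus; ring).
    apply qnum_nat_nz; auto; lia. }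
  field. repeat split; auto.
Qed.

Lemma cf0 L mu m : cf L mu m 0 = 1.
Proof.
  unfold cf.
  rewrite (qpow_ext L (- (INR 0 * (INR 0 - 1) / 2)%R) 0)
    by (apply injective_projections; simpl; field).
  rewrite qpow_0. simpl. field.
Qed.

Lemma Phi0_diag L m mu Phi : transcendental (cexp L) ->
  (forall n : nat, qpow L (2 * mu) <> qpow L (2 * INR n)) ->
  is_Phi_w0_trig L mu m Phi -> forall l, Phi O l (Z.of_nat l) = cf L mu m l.
Proof.
  intros T G [[_ [_ [He _]]] [H00 _]] l. induction l.
  - simpl. rewrite H00, cf0. reflexivity.
  - specialize (He O l (Z.of_nat (S l))). unfold tensor_e in He. cbv beta iota in He.
    replace (Z.of_nat (S l) - 1)%Z with (Z.of_nat l) in He by lia.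
    rewrite IHl in He. rewrite <- INR_IZR_INZ in He.
    replace (INR m - (INR (S l) - 1)) with (RtoC (INR m) - INR l) in He
      by (rewrite S_INR, RtoC_plus; ring).
    assert (R := cf_rec L mu m l T G).
    assert (NZ : qnum L (mu - INR l) * qnum L (INR l + 1) <> 0).
    { intro E. apply Cmult_integral in E. destruct E as [E|E].
      - revert E. apply qnum_mu_nz; auto.
      - revert E. replace (INR l + 1) with (RtoC (INR (S l))) by (rewrite S_INR, RtoC_plus; ring).
        apply qnum_nat_nz; auto; lia. }
    set (X := Phi O (S l) (Z.of_nat (S l))) in *.
    set (ab := qnum L (mu - INR l) * qnum L (INR l + 1)) in *.
    replace X with (/ ab * (ab * X)) by (field; auto).
    replace (ab * X) with (- (qpow L (mu - 2 * INR l) * qnum L (INR m - INR l) * cf L mu m l)).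
    2:{ set (c := qpow L (mu - 2 * INR l) * qnum L (INR m - INR l) * cf L mu m l) in *.
        replace (ab * X) with (ab * X + c - c) by ring. rewrite He. ring. }
    rewrite <- R. field. auto.
Qed.

Definition yk L k := qpow L (- 2 * INR k).
Definition gk L m k := qnum L (INR m + INR k + 1).
Fixpoint Qs L mu m j k := match j with
  | O => cf L mu m k
  | S j' => yk L k * Qs L mu m j' k + gk L m k * Qs L mu m j' (S k) end.

Lemma Phi_Q L m mu Phi : transcendental (cexp L) ->
  (forall n : nat, qpow L (2 * mu) <> qpow L (2 * INR n)) ->
  is_Phi_w0_trig L mu m Phi -> forall j k, Phi j (j + k)%nat (Z.of_nat k) = Qs L mu m j k.
Proof.
  intros T G HP. assert (D0 := Phi0_diag L m mu Phi T G HP).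
  destruct HP as [[_ [_ [_ Hf]]] _].
  induction j; intro k.
  - simpl. apply D0.
  - rewrite <- Hf. unfold tensor_f. change (S j + k)%nat with (S (j + k)).
    rewrite <- INR_IZR_INZ.
    replace (Z.of_nat k + 1)%Z with (Z.of_nat (S k)) by lia.
    replace (S (j + k)) with (j + S k)%nat by lia.
    rewrite !IHj. simpl. reflexivity.
Qed.

Lemma qnum_0 L : qnum L 0 = 0.
Proof.
  unfold qnum. rewrite (qpow_ext L (- 0) 0) by ring. unfold Cdiv. ring.
Qed.

Lemma qfall_zero L m k : (m < k)%nat -> qfall L m k = 0.
Proof.
  induction k; intro H. lia.
  change (qfall L m (S k)) with (qnum L (INR m - INR k) * qfall L m k).
  destruct (Nat.eq_dec k m) as [->|Hn].
    replace (RtoC (INR m) - RtoC (INR m)) with (0:C) by ring. rewrite qnum_0. ring.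
  - rewrite IHk by lia. ring.
Qed.

Lemma cf_zero L mu m k : (m < k)%nat -> cf L mu m k = 0.
Proof. intro H. unfold cf. rewrite qfall_zero by auto. ring. Qed.

Lemma Qs_zero L mu m j : forall k, (m < k)%nat -> Qs L mu m j k = 0.
Proof.
  induction j; intros k H; simpl.
  - apply cf_zero; auto.
  - rewrite !IHj by lia. ring.
Qed.

Fixpoint mx (f : nat -> R) n := match n with O => f O | S n' => Rmax (mx f n') (f (S n')) end.

Lemma mx_ge f n k : (k <= n)%nat -> (f k <= mx f n)%R.
Proof.
  induction n; intro H.
  - replace k with O by lia. simpl. lra.
  - simpl. destruct (Nat.eq_dec k (S n)) as [->|Hn].
    + apply Rmax_r.
    + eapply Rle_trans. apply IHn. lia. apply Rmax_l.
Qed.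

Lemma mx_nonneg f n : (forall k, 0 <= f k)%R -> (0 <= mx f n)%R.
Proof. intro H. eapply Rle_trans. apply (H O). apply mx_ge. lia. Qed.

Definition Mb L m := (1 + mx (fun k => (Cmod (yk L k) + Cmod (gk L m k))%R) (2*m+1))%R.
Definition Cb L mu m := mx (fun k => Cmod (cf L mu m k)) m.

Lemma Mb_ge1 L m : (1 <= Mb L m)%R.
Proof.
  unfold Mb. assert (0 <= mx (fun k => (Cmod (yk L k) + Cmod (gk L m k))%R) (2*m+1))%R.
  { apply mx_nonneg. intro k. pose proof (Cmod_ge_0 (yk L k)). pose proof (Cmod_ge_0 (gk L m k)). lra. }
  lra.
Qed.

Lemma yg_bound L m k : (k <= 2*m+1)%nat -> (Cmod (yk L k) + Cmod (gk L m k) <= Mb L m - 1)%R.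
Proof.
  intro H. unfold Mb.
  pose proof (mx_ge (fun k => (Cmod (yk L k) + Cmod (gk L m k))%R) (2*m+1) k H). simpl in *. lra.
Qed.

Lemma Qs_bound L mu m j : forall k, (Cmod (Qs L mu m j k) <= Cb L mu m * Mb L m ^ j)%R.
Proof.
  assert (HC : (0 <= Cb L mu m)%R) by (apply mx_nonneg; intro; apply Cmod_ge_0).
  assert (HM := Mb_ge1 L m).
  induction j; intro k.
  - simpl. destruct (le_lt_dec k m).
    + rewrite Rmult_1_r. apply (mx_ge (fun k => Cmod (cf L mu m k))). auto.
    + rewrite cf_zero, Cmod_0 by auto. lra.
  - destruct (le_lt_dec k m).
    + simpl Qs. eapply Rle_trans. apply Cmod_triangle. rewrite !Cmod_mult.
      pose proof (IHj k). pose proof (IHj (S k)).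
      pose proof (yg_bound L m k ltac:(lia)).
      pose proof (Cmod_ge_0 (yk L k)). pose proof (Cmod_ge_0 (gk L m k)).
      assert (0 <= Cb L mu m * Mb L m ^ j)%R.
      { apply Rmult_le_pos; auto. apply pow_le. lra. }
      simpl pow.
      apply Rle_trans with ((Cmod (yk L k) + Cmod (gk L m k)) * (Cb L mu m * Mb L m ^ j))%R.
      * rewrite Rmult_plus_distr_r. apply Rplus_le_compat; apply Rmult_le_compat_l; auto.
      * apply Rle_trans with (Mb L m * (Cb L mu m * Mb L m ^ j))%R.
        -- apply Rmult_le_compat_r; auto. lra.
        -- right. ring.
    + rewrite Qs_zero, Cmod_0 by auto. apply Rmult_le_pos; auto. apply pow_le. lra.
Qed.

Lemma is_series_C_unique (a : nat -> C) l1 l2 : is_series a l1 -> is_series a l2 -> l1 = l2.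
Proof.
  intros H1 H2. apply (filterlim_locally_unique (F := eventually) (sum_n a)); auto.
Qed.

Lemma sum_n_zero n : sum_n (fun _ : nat => (0:C)) n = (0:C).
Proof.
  induction n. rewrite sum_O. reflexivity. rewrite sum_Sn, IHn. apply Cplus_0_l.
Qed.

Lemma is_series_zero : is_series (fun _ : nat => (0:C)) (0:C).
Proof.
  unfold is_series. apply (filterlim_ext (fun _ => (0:C))).
  intro n. symmetry. apply sum_n_zero. apply filterlim_const.
Qed.

Lemma ex_series_a L mu m (x : C) k : (Cmod x * Mb L m < 1)%R ->
  ex_series (fun j => x ^ j * Qs L mu m j k).
Proof.
  intro Hx.
  assert (HC : (0 <= Cb L mu m)%R) by (apply mx_nonneg; intro; apply Cmod_ge_0).
  apply (@ex_series_le C_AbsRing C_CompleteNormedModule _ (fun n => Cb L mu m * (Cmod x * Mb L m) ^ n)%R).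
  - intro n. change (norm (x ^ n * Qs L mu m n k)) with (Cmod (x ^ n * Qs L mu m n k)).
    rewrite Cmod_mult, Cmod_pow, Rpow_mult_distr.
    pose proof (Qs_bound L mu m n k).
    assert (0 <= Cmod x ^ n)%R by (apply pow_le, Cmod_ge_0).
    apply Rle_trans with (Cmod x ^ n * (Cb L mu m * Mb L m ^ n))%R.
    apply Rmult_le_compat_l; auto. right. ring.
  - apply (ex_series_ext (fun n => @scal R_AbsRing R_NormedModule (Cb L mu m) ((Cmod x * Mb L m) ^ n)%R)).
    intro n. reflexivity.
    apply (@ex_series_scal R_AbsRing R_NormedModule). apply ex_series_geom.
    assert (0 <= Cmod x * Mb L m)%R.
    { apply Rmult_le_pos. apply Cmod_ge_0. pose proof (Mb_ge1 L m). lra. }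
    rewrite Rabs_pos_eq; auto.
Qed.

Fixpoint Pf (f : nat -> C) k n : C := match n with O => 1 | S n' => f k * Pf f (S k) n' end.
Fixpoint csum (f : nat -> C) n : C := match n with O => 0 | S n' => csum f n' + f n' end.

Lemma csum_front f n : csum f (S n) = f O + csum (fun i => f (S i)) n.
Proof. induction n; simpl in *. ring. rewrite IHn. ring. Qed.

Lemma csum_scal c f n : csum (fun i => c * f i) n = c * csum f n.
Proof. induction n; simpl. ring. rewrite IHn. ring. Qed.

Lemma csum_ext (f g : nat -> C) n : (forall i, f i = g i) -> csum f n = csum g n.
Proof. intro H. induction n; simpl; auto. rewrite IHn, H. auto. Qed.

Definition hk L lam t := 1 - qpow L (- 2 * lam - 2 * INR t).

Definition Tt L mu m lam k n := cf L mu m (k + n) * qpow L (-2 * lam) ^ n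
  * Pf (gk L m) k n * / Pf (hk L lam) k (S n).
Definition Sk L mu m lam k := csum (Tt L mu m lam k) (S m).

Lemma Tt_S L mu m lam k n :
  Tt L mu m lam k (S n) = qpow L (-2 * lam) * gk L m k * / hk L lam k * Tt L mu m lam (S k) n.
Proof.
  unfold Tt. replace (k + S n)%nat with (S k + n)%nat by lia.
  change (Pf (gk L m) k (S n)) with (gk L m k * Pf (gk L m) (S k) n).
  change (Pf (hk L lam) k (S (S n))) with (hk L lam k * Pf (hk L lam) (S k) (S n)).
  rewrite Cinv_mult_gen. simpl Cpow. ring.
Qed.

Lemma Tt_zero L mu m lam k n : (m < k + n)%nat -> Tt L mu m lam k n = 0.
Proof. intro H. unfold Tt. rewrite cf_zero by auto. ring. Qed.

Lemma hk_xy L lam k : hk L lam k = 1 - qpow L (-2 * lam) * yk L k.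
Proof. unfold hk, yk. rewrite <- qpow_add. f_equal. apply qpow_ext. ring. Qed.

Lemma hk_nz L m lam k : (Cmod (qpow L (-2 * lam)) * Mb L m < 1)%R -> (k <= m)%nat -> hk L lam k <> 0.
Proof.
  intros Hx Hk E. rewrite hk_xy in E. apply Csub0 in E.
  assert (Cmod (qpow L (-2 * lam) * yk L k) = 1%R) by (rewrite <- E; apply Cmod_1).
  rewrite Cmod_mult in H.
  pose proof (yg_bound L m k ltac:(lia)).
  pose proof (Cmod_ge_0 (gk L m k)). pose proof (Cmod_ge_0 (qpow L (-2 * lam))).
  assert (Cmod (yk L k) <= Mb L m)%R by lra.
  assert (Cmod (qpow L (-2 * lam)) * Cmod (yk L k) <= Cmod (qpow L (-2 * lam)) * Mb L m)%R
    by (apply Rmult_le_compat_l; auto).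
  lra.
Qed.

Lemma series_k L mu m lam : (Cmod (qpow L (-2 * lam)) * Mb L m < 1)%R ->
  forall d k, (m + 1 <= k + d)%nat ->
  is_series (fun j => qpow L (-2 * lam) ^ j * Qs L mu m j k) (Sk L mu m lam k).
Proof.
  intros Hx. set (x := qpow L (-2 * lam)) in *.
  induction d; intros k Hk.
  all: destruct (le_lt_dec k m) as [Hkm|Hkm].
  1: lia.
  1,3: (apply (is_series_ext (fun _ => (0:C)));
        [intro n; cbv beta; rewrite Qs_zero by auto; symmetry; apply Cmult_0_r|];
        replace (Sk L mu m lam k) with (0:C); [apply is_series_zero|];
        unfold Sk; rewrite (csum_ext _ (fun _ => 0)); [|intro i; apply Tt_zero; lia];
        clear; induction (S m); simpl; [auto| rewrite <- IHn; ring]).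
  assert (HB := IHd (S k) ltac:(lia)).
  destruct (ex_series_a L mu m x k Hx) as [A HA]. change C in A.
  set (a := fun j => x ^ j * Qs L mu m j k) in *.
  set (b := fun j => x ^ j * Qs L mu m j (S k)) in *.
  set (B := Sk L mu m lam (S k)) in *.
  assert (H1 : is_series (fun j => a (S j)) (A - a O)).
  { assert (E0 : A - a O + a O = A) by ring.
    apply is_series_incr_1. change (is_series a (A - a O + a O)). rewrite E0. exact HA. }
  assert (H2 : is_series (fun j => a (S j)) (x * yk L k * A + x * gk L m k * B)).
  { apply (is_series_ext (fun j => plus (scal (x * yk L k) (a j)) (scal (x * gk L m k) (b j)))).
    - intro n. change (x * yk L k * a n + x * gk L m k * b n = a (S n)).
      unfold a, b. simpl. ring.
    - apply (is_series_plus _ _ (scal (x * yk L k) A) (scal (x * gk L m k) B));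
      apply (@is_series_scal C_AbsRing C_NormedModule); auto. }
  assert (U := is_series_C_unique _ _ _ H1 H2).
  assert (Ha0 : a O = cf L mu m k) by (unfold a; simpl; ring).
  rewrite Ha0 in U.
  assert (Hh := hk_nz L m lam k Hx Hkm).
  rewrite hk_xy in Hh. fold x in Hh.
  replace (Sk L mu m lam k) with A; auto.
  assert (EA : A = (cf L mu m k + x * gk L m k * B) / (1 - x * yk L k)).
  { assert (E : A * (1 - x * yk L k) = cf L mu m k + x * gk L m k * B).
    { replace (cf L mu m k) with (A - (A - cf L mu m k)) by ring. rewrite U. ring. }
    rewrite <- E. field. auto. }
  rewrite EA. unfold Sk. rewrite csum_front.
  rewrite (csum_ext _ (fun i => (x * gk L m k * / hk L lam k) * Tt L mu m lam (S k) i))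
    by (intro i; apply Tt_S).
  rewrite csum_scal.
  assert (EB : B = csum (Tt L mu m lam (S k)) m).
  { unfold B, Sk.
    change (csum (Tt L mu m lam (S k)) m + Tt L mu m lam (S k) m = csum (Tt L mu m lam (S k)) m).
    rewrite Tt_zero by lia. ring. }
  assert (ET : Tt L mu m lam k 0 = cf L mu m k / hk L lam k).
  { unfold Tt. rewrite Nat.add_0_r. simpl Pf. simpl Cpow. unfold Cdiv.
    rewrite Cinv_mult_gen. replace (/ (1:C)) with (1:C) by (field; apply C1_neq_C0). ring. }
  rewrite ET, <- EB, hk_xy. fold x.
  field. auto.
Qed.

Lemma Pf_back (f : nat -> C) n : forall k, Pf f k (S n) = Pf f k n * f (k + n)%nat.
Proof.
  induction n; intro k.
  - simpl. rewrite Nat.add_0_r. ring.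
  - change (Pf f k (S (S n))) with (f k * Pf f (S k) (S n)).
    change (Pf f k (S n)) with (f k * Pf f (S k) n).
    rewrite IHn. replace (S k + n)%nat with (k + S n)%nat by lia. ring.
Qed.

Lemma Pf_cprod (f : nat -> C) n : Pf f 0 n = cprod f n.
Proof. induction n. reflexivity. rewrite Pf_back. simpl. rewrite IHn. reflexivity. Qed.

Lemma Pf_g L m l : Pf (gk L m) 0 l = qfall L (m + l) l.
Proof.
  induction l. reflexivity.
  rewrite Pf_back, IHl. replace (m + S l)%nat with (S (m + l)) by lia.
  rewrite qfall_front. unfold gk. simpl (0 + l)%nat.
  replace (qnum L (INR (S (m + l)))) with (qnum L (INR m + INR l + 1)).
  ring. f_equal. rewrite S_INR, plus_INR, !RtoC_plus. ring.
Qed.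

Lemma sum_n_csum (f : nat -> C) n : sum_n f n = csum f (S n).
Proof.
  induction n.
  - rewrite sum_O. simpl. ring.
  - rewrite sum_Sn, IHn. reflexivity.
Qed.

Lemma term_eq L mu m lam l :
     (-1) ^ l * qpow L (- 2 * lam * INR l)
     * qpow L (- (INR l * (INR l - 1) / 2)%R)
     * (qfall L m l * qfall L (m + l) l / qfall L l l)
     * ((qpow L 1 - qpow L (-1)) ^ l
        / (cprod (fun i => 1 - qpow L (- 2 * mu + 2 * INR i)) l
           * cprod (fun i => 1 - qpow L (- 2 * lam - 2 * INR i)) (S l)))
  = Tt L mu m lam 0 l.
Proof.
  unfold Tt. simpl (0 + l)%nat. rewrite Pf_g, Pf_cprod.
  replace (qpow L (- 2 * lam * INR l)) with (qpow L (-2 * lam) ^ l).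
  2:{ rewrite <- qpow_nat. apply qpow_ext. ring. }
  unfold cf, hk, Cdiv. rewrite !Cinv_mult_gen. ring.
Qed.

Lemma trace_eq L m mu Phi lam j : transcendental (cexp L) ->
  (forall n : nat, qpow L (2 * mu) <> qpow L (2 * INR n)) ->
  is_Phi_w0_trig L mu m Phi ->
  trace_term L mu lam Phi j = qpow L (lam * mu) * (qpow L (-2 * lam) ^ j * Qs L mu m j 0).
Proof.
  intros T G HP. unfold trace_term.
  assert (E := Phi_Q L m mu Phi T G HP j 0). rewrite Nat.add_0_r in E. simpl Z.of_nat in E.
  rewrite E. rewrite <- qpow_nat, Cmult_assoc, <- qpow_add.
  f_equal. apply qpow_ext. ring.
Qed.

Theorem proposition7p2 (L : C) (m : nat) (mu : C) (Phi : vmap) :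
  transcendental (cexp L) ->
  (* mu generic: M_mu irreducible, i.e. q^{2 mu} <> q^{2n} for all n >= 0 *)
  (forall n : nat, qpow L (2 * mu) <> qpow L (2 * INR n)) ->
  is_Phi_w0_trig L mu m Phi ->
  exists eps : R, (0 < eps)%R /\
    forall lam : C, (Cmod (qpow L (- 2 * lam)) < eps)%R ->
      is_series (trace_term L mu lam Phi) (trace_formula L mu lam m).
Proof.
  intros T G HP.
  assert (HM := Mb_ge1 L m).
  exists (/ Mb L m)%R. split.
  { apply Rinv_0_lt_compat. lra. }
  intros lam Hl.
  assert (Hx : (Cmod (qpow L (-2 * lam)) * Mb L m < 1)%R).
  { apply Rmult_lt_compat_r with (r := Mb L m) in Hl; [|lra].
    rewrite Rinv_l in Hl by lra. exact Hl. }
  assert (HS := series_k L mu m lam Hx (m + 1) 0 ltac:(lia)).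
  unfold trace_formula. rewrite sum_n_csum.
  rewrite (csum_ext _ (Tt L mu m lam 0)) by (intro l; apply term_eq).
  change (csum (Tt L mu m lam 0) (S m)) with (Sk L mu m lam 0).
  apply (is_series_ext (fun j => @scal C_AbsRing C_NormedModule (qpow L (lam * mu))
             (qpow L (-2 * lam) ^ j * Qs L mu m j 0))).
  - intro j. rewrite (trace_eq L m mu Phi lam j T G HP). reflexivity.
  - apply (@is_series_scal C_AbsRing C_NormedModule). exact HS.
Qed.
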